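(* Let $a>b\geq1$ be coprime integers, $p=a/b$, $\hat n\geq 1$ an integer, $N=(2^b+2)\hat n+2^{a-b}+2^b$, and let $g_0=\mathbf{1}_{(2^b+1)\hat n}\circ\mathbf{0}_{\hat n}\circ\mathbf{0}_{2^{a-b}}\circ\mathbf{1}_{2^b}$ and, for $i\in[2^{a-b}]$, $g_i=\mathbf{0}_{(2^b+2)\hat n}\circ\mathbf{0}_{i-1}\circ 1\circ\mathbf{0}_{2^{a-b}+2^b-i}$. Let $s^*\in\{0,1\}^N$ have zeros in all of its last $2^{a-b}+2^b$ positions. (1) If $\mathrm{hs}(s^*,\mathbf{0}_N)\subseteq[(2^b+1)\hat n]$ and $d(s^*,\mathbf{0}_N)=\hat n$, then $\sum_{i=0}^{2^{a-b}}d(s^*,g_i)^p=(2^a+2^{a-b})(\hat n+1)^p$. (2) Otherwise $\sum_{i=0}^{2^{a-b}}d(s^*,g_i)^p>(2^a+2^{a-b})(\hat n+1)^p$.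
   Context: $d$ denotes Hamming distance; $\mathrm{hs}(s,s')=\{j: s[j]\neq s'[j]\}$; $\mathbf{0}_\ell,\mathbf{1}_\ell$ are the all-zero/all-one strings of length $\ell$; $\circ$ is concatenation; $[t]=\{1,\dots,t\}$. *)

(* Defs.v *)
From Stdlib Require Import Reals List Arith Lia.
Import ListNotations.
Open Scope R_scope.

Fixpoint hamming (s t : list bool) : nat :=
  match s, t with
  | x :: s', y :: t' => ((if Bool.eqb x y then 0 else 1) + hamming s' t')%nat
  | _, _ => 0%nat
  end.

(* j (1-indexed) belongs to hs(s,t) = {j : s[j] <> t[j]} *)
Definition in_hs (s t : list bool) (j : nat) : Prop :=
  (1 <= j <= length s)%nat /\ nth (j - 1) s false <> nth (j - 1) t false.

Definition zeros (l : nat) : list bool := repeat false l.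
Definition ones (l : nat) : list bool := repeat true l.

Definition bigN (a b nh : nat) : nat := ((2 ^ b + 2) * nh + 2 ^ (a - b) + 2 ^ b)%nat.

Definition g0 (a b nh : nat) : list bool :=
  ones ((2 ^ b + 1) * nh) ++ zeros nh ++ zeros (2 ^ (a - b)) ++ ones (2 ^ b).

Definition gi (a b nh i : nat) : list bool :=
  zeros ((2 ^ b + 2) * nh) ++ zeros (i - 1) ++ [true] ++ zeros (2 ^ (a - b) + 2 ^ b - i).

Definition g (a b nh i : nat) : list bool :=
  match i with O => g0 a b nh | _ => gi a b nh i end.

Definition cost (a b nh : nat) (s : list bool) : R :=
  sum_f_R0 (fun i => Rpower (INR (hamming s (g a b nh i))) (INR a / INR b)) (2 ^ (a - b)).

Definition target (a b nh : nat) : R :=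
  INR (2 ^ a + 2 ^ (a - b)) * Rpower (INR nh + 1) (INR a / INR b).

(* Main.v *)
Require Import Defs.
From Stdlib Require Import Reals List Arith Lia Lra.
Import ListNotations.
Open Scope R_scope.

Lemma tangent_lt (p u v : R) : 1 < p -> 0 < u -> 0 < v -> v <> u ->
  Rpower v p > Rpower u p + p * Rpower u (p - 1) * (v - u).
Proof.
  intros Hp Hu Hv Hne.
  destruct (Rlt_or_le u v) as [Huv|Hvu].
  - destruct (MVT_cor2 (fun x => Rpower x p) (fun x => p * Rpower x (p - 1)) u v Huv)
      as [c [Hc Hcr]].
    { intros c Hc. apply derivable_pt_lim_power. lra. }
    assert (Rpower u (p-1) < Rpower c (p-1)) by (apply Rlt_Rpower_l; lra).
    assert (p * Rpower u (p-1) * (v-u) < p * Rpower c (p-1) * (v-u)).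
    { apply Rmult_lt_compat_r; [lra|]. apply Rmult_lt_compat_l; lra. }
    lra.
  - assert (Hvu' : v < u) by lra.
    destruct (MVT_cor2 (fun x => Rpower x p) (fun x => p * Rpower x (p - 1)) v u Hvu')
      as [c [Hc Hcr]].
    { intros c Hc. apply derivable_pt_lim_power. lra. }
    assert (Rpower c (p-1) < Rpower u (p-1)) by (apply Rlt_Rpower_l; lra).
    assert (p * Rpower c (p-1) * (u-v) < p * Rpower u (p-1) * (u-v)).
    { apply Rmult_lt_compat_r; [lra|]. apply Rmult_lt_compat_l; lra. }
    lra.
Qed.

Lemma tangent_le (p u v : R) : 1 < p -> 0 < u -> 0 < v ->
  Rpower v p >= Rpower u p + p * Rpower u (p - 1) * (v - u).
Proof.
  intros. destruct (Req_dec v u) as [->|].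
  - lra.
  - left. now apply tangent_lt.
Qed.
Open Scope nat_scope.
Lemma ham_app l1 l2 t1 t2 : length l1 = length t1 ->
  hamming (l1 ++ l2) (t1 ++ t2) = hamming l1 t1 + hamming l2 t2.
Proof.
  revert t1; induction l1 as [|x l1 IH]; intros [|y t1] H; simpl in *; try lia.
  rewrite IH; lia.
Qed.

Lemma ham_ones_zeros l : hamming l (ones (length l)) + hamming l (zeros (length l)) = length l.
Proof. induction l as [|[] l IH]; simpl; [lia| |]; unfold ones, zeros in *; simpl; lia. Qed.

Lemma ham_zz k : hamming (zeros k) (zeros k) = 0.
Proof. induction k; simpl; auto. Qed.

Lemma ham_zo k : hamming (zeros k) (ones k) = k.
Proof. induction k; simpl; auto. Qed.

Lemma zeros_app i j : zeros (i + j) = zeros i ++ zeros j.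
Proof. unfold zeros; apply repeat_app. Qed.

Lemma ham_single i j : hamming (zeros (i + 1 + j)) (zeros i ++ [true] ++ zeros j) = 1.
Proof.
  rewrite !zeros_app. rewrite <- app_assoc.
  rewrite ham_app by (unfold zeros; now rewrite !repeat_length).
  rewrite ham_app by reflexivity. rewrite !ham_zz. reflexivity.
Qed.

Lemma ham_pos_ex l : hamming l (zeros (length l)) <> 0 ->
  exists k, k < length l /\ nth k l false = true.
Proof.
  induction l as [|[] l IH]; simpl; intros H.
  - lia.
  - exists 0; split; auto; lia.
  - destruct (IH H) as [k [Hk Hn]]. exists (S k); split; auto; lia.
Qed.

Lemma ham_zero_nth l : hamming l (zeros (length l)) = 0 -> forall k, nth k l false = false.
Proof.
  induction l as [|[] l IH]; simpl; intros H k.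
  - destruct k; auto.
  - lia.
  - destruct k; auto.
Qed.

Lemma zeros_eq l : (forall k, k < length l -> nth k l false = false) -> l = zeros (length l).
Proof.
  induction l as [|x l IH]; simpl; intros H; auto.
  pose proof (H 0 ltac:(lia)) as H0; simpl in H0; subst x.
  unfold zeros in *; simpl; f_equal. apply IH. intros k Hk. apply (H (S k)). lia.
Qed.

Lemma sum_const (f : nat -> R) (K : R) (m : nat) :
  (forall i, 1 <= i <= m -> f i = K) -> sum_f_R0 f m = (f 0%nat + INR m * K)%R.
Proof.
  intros H. assert (forall k, k <= m -> sum_f_R0 f k = (f 0%nat + INR k * K)%R).
  { induction k; intros Hk; simpl sum_f_R0.
    - simpl. lra.
    - rewrite IHk by lia. rewrite (H (S k)) by lia. rewrite S_INR. ring. }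
  now apply H0.
Qed.

Lemma Rpow2 (b e : nat) (P : R) : (INR b * P = INR e)%R ->
  Rpower (INR (2 ^ b)) P = INR (2 ^ e).
Proof.
  intros H. rewrite !pow_INR. simpl INR.
  rewrite <- !Rpower_pow by lra. rewrite Rpower_mult. now rewrite H.
Qed.
Close Scope nat_scope. Open Scope R_scope.

Theorem claim3 (a b nh : nat) (s : list bool) :
  (1 <= b)%nat -> (b < a)%nat -> Nat.gcd a b = 1%nat -> (1 <= nh)%nat ->
  length s = bigN a b nh ->
  (forall j : nat, (bigN a b nh - (2 ^ (a - b) + 2 ^ b) <= j < bigN a b nh)%nat ->
     nth j s false = false) ->
  ( ((forall j, in_hs s (zeros (bigN a b nh)) j -> (1 <= j <= (2 ^ b + 1) * nh)%nat) /\
      hamming s (zeros (bigN a b nh)) = nh) ->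
    cost a b nh s = target a b nh ) /\
  ( ~ ((forall j, in_hs s (zeros (bigN a b nh)) j -> (1 <= j <= (2 ^ b + 1) * nh)%nat) /\
      hamming s (zeros (bigN a b nh)) = nh) ->
    cost a b nh s > target a b nh ).
Proof.
  Local Open Scope nat_scope.
  intros Hb Hab _ Hn Hlen Hz.
  unfold cost, target, g, g0, gi, bigN in *.
  remember (2 ^ b) as q eqn:Hq.
  remember (2 ^ (a - b)) as m eqn:Hm.
  assert (Hq1 : (1 <= q)%nat) by (subst q; apply Nat.neq_0_lt_0, Nat.pow_nonzero; lia).
  assert (Hm1 : (1 <= m)%nat) by (subst m; apply Nat.neq_0_lt_0, Nat.pow_nonzero; lia).
  set (n1 := (q + 1) * nh).
  set (s1 := firstn n1 s). set (r := skipn n1 s).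
  set (s2 := firstn nh r). set (s3 := skipn nh r).
  assert (Hs : s = s1 ++ s2 ++ s3).
  { unfold s2, s3, s1, r. rewrite !firstn_skipn. reflexivity. }
  assert (L1 : length s1 = n1) by (unfold s1; rewrite length_firstn; lia).
  assert (Lr : length r = (nh + (m + q))%nat) by (unfold r; rewrite length_skipn; unfold n1; lia).
  assert (L2 : length s2 = nh) by (unfold s2; rewrite length_firstn; lia).
  assert (L3 : length s3 = (m + q)%nat) by (unfold s3; rewrite length_skipn; lia).
  assert (Hnth2 : forall k, (k < nh)%nat -> nth (n1 + k) s false = nth k s2 false).
  { intros k Hk. rewrite Hs, app_nth2 by lia. rewrite L1.
    replace (n1 + k - n1) with k by lia. apply app_nth1. lia. }
  assert (Hs3 : s3 = zeros (m + q)).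
  { rewrite <- L3. apply zeros_eq. intros k Hk.
    transitivity (nth (n1 + nh + k) s false).
    2: { apply Hz. unfold n1; lia. }
    rewrite Hs. rewrite app_nth2 by lia. rewrite L1.
    replace (n1 + nh + k - n1) with (nh + k) by lia.
    rewrite app_nth2 by lia. rewrite L2. f_equal. lia. }
  set (x := hamming s1 (zeros n1)).
  set (y := hamming s2 (zeros nh)).
  assert (Hx : (x <= n1)%nat).
  { pose proof (ham_ones_zeros s1) as HH. rewrite L1 in HH. unfold x. lia. }
  assert (Hw : hamming s (zeros ((q + 2) * nh + m + q)) = (x + y)%nat).
  { replace ((q + 2) * nh + m + q) with (n1 + (nh + (m + q))) by (unfold n1; lia).
    rewrite !zeros_app, Hs, Hs3.
    rewrite ham_app by (unfold zeros; rewrite repeat_length; auto).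
    rewrite ham_app by (unfold zeros; rewrite repeat_length; auto).
    rewrite <- zeros_app, ham_zz. unfold x, y. lia. }
  assert (Hd0 : hamming s (ones n1 ++ zeros nh ++ zeros m ++ ones q) = (n1 - x + y + q)%nat).
  { rewrite Hs, Hs3, zeros_app.
    rewrite ham_app by (unfold ones; rewrite repeat_length; auto).
    rewrite ham_app by (unfold zeros; rewrite repeat_length; auto).
    rewrite ham_app by (unfold zeros; rewrite !repeat_length; auto).
    rewrite ham_zz, ham_zo.
    pose proof (ham_ones_zeros s1) as HH. rewrite L1 in HH. fold x in HH. fold y. lia. }
  assert (Hdi : forall i, (1 <= i <= m)%nat ->
     hamming s (zeros ((q + 2) * nh) ++ zeros (i - 1) ++ [true] ++ zeros (m + q - i)) = (x + y + 1)%nat).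
  { intros i Hi.
    replace ((q + 2) * nh) with (n1 + nh) by (unfold n1; lia).
    rewrite zeros_app, <- !app_assoc, Hs.
    rewrite ham_app by (unfold zeros; rewrite repeat_length; auto).
    rewrite ham_app by (unfold zeros; rewrite repeat_length; auto).
    rewrite Hs3. replace (m + q) with (i - 1 + 1 + (m + q - i)) at 1 by lia.
    rewrite ham_single. unfold x, y. lia. }
  assert (Hcond : ((forall j, in_hs s (zeros ((q + 2) * nh + m + q)) j -> (1 <= j <= n1)%nat) /\
      hamming s (zeros ((q + 2) * nh + m + q)) = nh) <-> (y = 0 /\ x = nh)%nat).
  { rewrite Hw. split.
    - intros [H1 H2]. destruct (Nat.eq_dec y 0) as [Hy|Hy]; [lia|].
      exfalso. unfold y in Hy. rewrite <- L2 in Hy. destruct (ham_pos_ex s2 Hy) as [k [Hk Hk2]].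
      rewrite L2 in Hk.
      assert (Hj : in_hs s (zeros ((q + 2) * nh + m + q)) (n1 + k + 1)).
      { split. { rewrite Hlen. unfold n1. lia. }
        replace (n1 + k + 1 - 1) with (n1 + k) by lia.
        rewrite Hnth2 by lia. rewrite Hk2. unfold zeros. rewrite nth_repeat. discriminate. }
      apply H1 in Hj. lia.
    - intros [Hy Hx']. split; [|lia]. intros j [Hj Hne].
      split; [lia|]. destruct (Nat.le_gt_cases j n1) as [|Hgt]; auto.
      exfalso. apply Hne. unfold zeros. rewrite nth_repeat.
      destruct (Nat.lt_ge_cases (j - 1) (n1 + nh)) as [Hl|Hl].
      + replace (j - 1) with (n1 + (j - 1 - n1)) by lia.
        rewrite Hnth2 by lia. unfold y in Hy. rewrite <- L2 in Hy. apply ham_zero_nth. exact Hy.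
      + apply Hz. rewrite Hlen in Hj. unfold n1 in Hl. lia. }
  set (P := (INR a / INR b)%R).
  rewrite sum_const with (K := Rpower (INR (x + y + 1)) P)
    by (intros i Hi; destruct i; [lia|]; simpl g; rewrite Hdi; auto).
  cbv beta iota. rewrite Hd0.
  assert (Hab' : (INR b < INR a)%R) by (apply lt_INR; lia).
  assert (Hb' : (0 < INR b)%R) by (apply lt_0_INR; lia).
  assert (HP : (1 < P)%R).
  { replace P with (1 + (INR a - INR b) / INR b)%R by (unfold P; field; lra).
    assert (0 < (INR a - INR b) / INR b)%R by (apply Rdiv_lt_0_compat; lra). lra. }
  assert (E1' : Rpower (INR q) P = INR (2 ^ a)).
  { subst q. apply Rpow2. unfold P. field. lra. }
  assert (E2' : Rpower (INR q) (P - 1) = INR m).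
  { subst q m. apply Rpow2. rewrite minus_INR by lia. unfold P. field. lra. }
  assert (HA0 : (0 < INR (n1 - x + y + q))%R) by (apply lt_0_INR; lia).
  assert (HB0 : (0 < INR (x + y + 1))%R) by (apply lt_0_INR; lia).
  set (Qr := INR q). set (c := (INR nh + 1)%R).
  set (X := INR x). set (Y := INR y). set (Nn := INR nh).
  assert (HA : INR (n1 - x + y + q) = (Qr * c + (Nn - X + Y))%R).
  { unfold n1. rewrite !plus_INR, minus_INR by (unfold n1 in Hx; lia).
    rewrite mult_INR, plus_INR. unfold Qr, c, X, Y, Nn. simpl INR. ring. }
  assert (HB : INR (x + y + 1) = (c + (X + Y - Nn))%R).
  { rewrite !plus_INR. unfold c, X, Y, Nn. simpl INR. ring. }
  rewrite HA in HA0 |- *. rewrite HB in HB0 |- *.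
  assert (Hq0 : (0 < Qr)%R) by (apply lt_0_INR; lia).
  assert (Hc0 : (0 < c)%R) by (unfold c; pose proof (pos_INR nh); lra).
  assert (HQc : (0 < Qr * c)%R) by (apply Rmult_lt_0_compat; lra).
  assert (E1 : Rpower (Qr * c) P = (INR (2 ^ a) * Rpower c P)%R).
  { rewrite <- Rpower_mult_distr by lra. unfold Qr; now rewrite E1'. }
  assert (E2 : Rpower (Qr * c) (P - 1) = (INR m * Rpower c (P - 1))%R).
  { rewrite <- Rpower_mult_distr by lra. unfold Qr; now rewrite E2'. }
  rewrite (plus_INR (2 ^ a) m).
  assert (Hm0 : (0 < INR m)%R) by (apply lt_0_INR; lia).
  assert (HRc1 : (0 < Rpower c (P - 1))%R) by (unfold Rpower; apply exp_pos).
  set (K := (INR m * P * Rpower c (P - 1))%R).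
  assert (HK : (0 < K)%R) by (unfold K; apply Rmult_lt_0_compat; [apply Rmult_lt_0_compat|]; lra).
  assert (T1 : (Rpower (Qr * c + (Nn - X + Y)) P >= INR (2 ^ a) * Rpower c P + K * (Nn - X + Y))%R).
  { pose proof (tangent_le P (Qr * c) (Qr * c + (Nn - X + Y)) HP HQc HA0) as T.
    rewrite E1, E2 in T. unfold K.
    replace (P * (INR m * Rpower c (P - 1)) * (Qr * c + (Nn - X + Y) - Qr * c))%R
      with (INR m * P * Rpower c (P - 1) * (Nn - X + Y))%R in T by ring. exact T. }
  assert (Hsum : (K * (Nn - X + Y) + K * (X + Y - Nn) = 2 * (K * Y))%R) by ring.
  assert (Hexp : ((INR (2 ^ a) + INR m) * Rpower c P = INR (2 ^ a) * Rpower c P + INR m * Rpower c P)%R) by ring.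
  assert (HY : (0 <= Y)%R) by apply pos_INR.
  split.
  - intros Hc'. apply Hcond in Hc'. destruct Hc' as [Hy0 Hx0].
    assert (HX : X = Nn) by (unfold X, Nn; rewrite Hx0; reflexivity).
    assert (HY0 : Y = 0%R) by (unfold Y; rewrite Hy0; reflexivity).
    rewrite HX, HY0. replace (Nn - Nn + 0)%R with 0%R by ring.
    replace (Nn + 0 - Nn)%R with 0%R by ring. rewrite !Rplus_0_r, E1. ring.
  - intros Hc'.
    destruct (Nat.eq_dec y 0) as [Hy0|Hy0].
    + assert (Hx0 : x <> nh) by (intro; apply Hc'; apply Hcond; auto).
      assert (HXn : X <> Nn) by (intro HH; apply Hx0; apply INR_eq; exact HH).
      assert (HY0 : Y = 0%R) by (unfold Y; rewrite Hy0; reflexivity).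
      pose proof (tangent_lt P c (c + (X + Y - Nn)) HP Hc0 HB0 ltac:(lra)) as T2.
      assert (T2m : (INR m * Rpower (c + (X + Y - Nn)) P > INR m * Rpower c P + K * (X + Y - Nn))%R).
      { replace (INR m * Rpower c P + K * (X + Y - Nn))%R with
          (INR m * (Rpower c P + P * Rpower c (P - 1) * (c + (X + Y - Nn) - c)))%R
          by (unfold K; ring).
        apply Rmult_lt_compat_l; lra. }
      assert (K * Y = 0)%R by (rewrite HY0; ring).
      lra.
    + assert (HYp : (0 < Y)%R) by (apply lt_0_INR; lia).
      pose proof (tangent_le P c (c + (X + Y - Nn)) HP Hc0 HB0) as T2.
      assert (T2m : (INR m * Rpower (c + (X + Y - Nn)) P >= INR m * Rpower c P + K * (X + Y - Nn))%R).
      { replace (INR m * Rpower c P + K * (X + Y - Nn))%R with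
          (INR m * (Rpower c P + P * Rpower c (P - 1) * (c + (X + Y - Nn) - c)))%R
          by (unfold K; ring).
        apply Rle_ge, Rmult_le_compat_l; lra. }
      assert (0 < K * Y)%R by (apply Rmult_lt_0_compat; lra).
      lra.
Qed.
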